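(* Consider the amortized variant of the algorithmic framework described below with parameters $\eta=1$, $\gamma\in(0,1)$ and $\xi=\gamma^{-1}+\tfrac12$. Then the framework maintains $\ell_i\le(1+\eta)T\,(=2T)$ for every machine $i$, where $\ell_i=\sum_{j\in \hat J_i\cup\check J_i}p_j/s_i$ is the total load of machine $i$ and $T$ is the current guess.
   Context: Problem: machines $1,\dots,m$ with speeds $s_1\ge s_2\ge\dots\ge s_m>0$; jobs arrive online, job $j$ has size $p_j>0$; the load of job $j$ on machine $i$ is $p_j/s_i$. Framework (amortized variant): it keeps a guess $T$, for each machine $i$ a partition of its jobs into old jobs $\hat J_i$ and new jobs $\check J_i$, and a potential $\pi_i$ per machine. Machine $i$ is saturated if $\check\ell_i:=\sum_{j\in\check J_i}p_j/s_i\ge T$, and $\eta$-eligible for job $j$ if $p_j/s_i\le \eta T$. Let $\tilde{\mathcal M}(\eta,j)$ be the set of machines that are $\eta$-eligible for $j$ and not saturated. When the first job $j_1$ arrives, set $T=p_{j_1}/s_1$ and place $j_1$ on machine 1. When a later job $j^*$ arrives, put it into a priority queue $Q$ (larger size = higher priority) and run: while $Q$ is nonempty, remove the largest job $j'$ from $Q$; then repeat: if $\tilde{\mathcal M}(\eta,j')\ne\emptyset$, choose a slowest machine $i'$ in it, move every $j\in\hat J_{i'}$ with $p_j\ge \eta^{-1}p_{j'}$ from $\hat J_{i'}$ to $\check J_{i'}$, and if $i'$ is still not saturated stop repeating; otherwise set $T:=\xi T$ and for every machine $i$ move all jobs of $\check J_i$ to $\hat J_i$ and set $\pi_i=0$.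 After a machine $i'$ is found, set $\pi:=\gamma p_{j'}+\pi_{i'}$; go through the jobs $j\in\hat J_{i'}$ in non-increasing order of size and, whenever $p_j\le\pi$, set $\pi:=\pi-p_j$ and move $j$ from $\hat J_{i'}$ into $Q$ (removing it from $i'$). Finally add $j'$ to $\check J_{i'}$ and set $\pi_{i'}:=\pi$. *)

(* Defs.v *)
(* Amortized variant of the online load-balancing framework
   on related machines, modelled as a small-step transition system. *)
From HB Require Import structures.
From mathcomp Require Import all_boot all_order all_algebra.
Set Implicit Arguments. Unset Strict Implicit. Unset Printing Implicit Defensive.
Import Order.TTheory GRing.Theory Num.Theory.
Local Open Scope ring_scope.

Section Framework.
Variable R : realFieldType.
Variable m : nat.
(* machines are 'I_m.+1 ; machine ord0 is "machine 1" (the fastest) *)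
Variable s : 'I_m.+1 -> R.
Variables eta gamma xi : R.

(* A job is identified with its size p_j > 0 (only sizes matter). *)
Record state := State {
  Tg  : R;                       (* the guess T *)
  hat : 'I_m.+1 -> seq R;        (* old jobs  \hat J_i *)
  chk : 'I_m.+1 -> seq R;        (* new jobs  \check J_i *)
  pot : 'I_m.+1 -> R;
  que : seq R;
  cur : option R                 (* job j' currently being assigned, if any *)
}.

Definition sumR (l : seq R) : R := \sum_(p <- l) p.

Definition load (st : state) (i : 'I_m.+1) : R :=
  sumR (hat st i ++ chk st i) / s i.

(* i is eta-eligible for a job of size p and not saturated *)
Definition avail (T : R) (c : 'I_m.+1 -> seq R) (p : R) (i : 'I_m.+1) : bool :=
  (p / s i <= eta * T) && (sumR (c i) / s i < T).

Definition upd {A : Type} (f : 'I_m.+1 -> A) (i : 'I_m.+1) (v : A) :=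
  fun k => if k == i then v else f k.

Definition stay_old (p : R) (l : seq R) := filter (fun q => q < p / eta) l.
Definition to_new (p : R) (l : seq R) := filter (fun q => p / eta <= q) l.

(* greedy pass through jobs (already sorted non-increasingly):
   returns (final potential, kept jobs, jobs moved into Q) *)
Fixpoint greedy (pi : R) (l : seq R) : R * seq R * seq R :=
  match l with
  | [::] => (pi, [::], [::])
  | x :: l' =>
      if x <= pi then
        let: (pi', k, r) := greedy (pi - x) l' in (pi', k, x :: r)
      else
        let: (pi', k, r) := greedy pi l' in (pi', x :: k, r)
  end.

Definition nonincr_sort (l : seq R) := sort (fun x y : R => y <= x) l.

Inductive step : state -> state -> Prop :=
| step_arrive T h c pi p :
    0 < p ->
    step (State T h c pi [::] None) (State T h c pi [:: p] None)
| step_pick T h c pi q j :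
    j \in q -> (forall x, x \in q -> x <= j) ->
    step (State T h c pi q None) (State T h c pi (rem j q) (Some j))
| step_scale T h c pi q j :
    (forall i, ~~ avail T c j i) ->
    step (State T h c pi q (Some j))
         (State (xi * T) (fun i => h i ++ c i) (fun _ => [::]) (fun _ => 0) q (Some j))
(* slowest available machine i'; after moving big old jobs it is saturated:
   repeat *)
| step_saturate T h c pi q j i :
    avail T c j i -> (forall k, avail T c j k -> s i <= s k) ->
    T <= sumR (c i ++ to_new j (h i)) / s i ->
    step (State T h c pi q (Some j))
         (State T (upd h i (stay_old j (h i))) (upd c i (c i ++ to_new j (h i)))
                pi q (Some j))
(* slowest available machine i'; it is still not saturated: place j' there
   after the amortized migration of old jobs into Q *)
| step_place T h c pi q j i :
    avail T c j i -> (forall k, avail T c j k -> s i <= s k) ->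
    sumR (c i ++ to_new j (h i)) / s i < T ->
    let g := greedy (gamma * j + pi i) (nonincr_sort (stay_old j (h i))) in
    step (State T h c pi q (Some j))
         (State T (upd h i g.1.2) (upd c i (c i ++ to_new j (h i) ++ [:: j]))
                (upd pi i g.1.1) (q ++ g.2) None).

(* state right after the first job (size p1) was placed on machine 1 *)
Definition init (p1 : R) : state :=
  State (p1 / s ord0) (fun _ => [::])
        (fun i => if i == ord0 then [:: p1] else [::]) (fun _ => 0) [::] None.

Inductive reach (p1 : R) : state -> Prop :=
| reach_init : reach p1 (init p1)
| reach_step st st' : reach p1 st -> step st st' -> reach p1 st'.

End Framework.

(* Main.v *)
Require Import Defs.
From HB Require Import structures.
From mathcomp Require Import all_boot all_order all_algebra.
From mathcomp Require Import lra ring.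
Import Order.TTheory GRing.Theory Num.Theory.
Local Open Scope ring_scope.

Section Aux.
Variable R : realFieldType.

Lemma sumR_cons (x : R) l : sumR (x :: l) = x + sumR l.
Proof. by rewrite /sumR big_cons. Qed.
Lemma sumR_nil : sumR (R:=R) [::] = 0.
Proof. by rewrite /sumR big_nil. Qed.
Lemma sumR_cat (l1 l2 : seq R) : sumR (l1 ++ l2) = sumR l1 + sumR l2.
Proof. by rewrite /sumR big_cat. Qed.
Lemma sumR_ge0 (l : seq R) : (forall x, x \in l -> 0 <= x) -> 0 <= sumR l.
Proof.
elim: l => [|x l IH] H; first by rewrite sumR_nil.
rewrite sumR_cons; apply: addr_ge0; first by apply: H; rewrite mem_head.
by apply: IH => y Hy; apply: H; rewrite inE Hy orbT.
Qed.
Lemma sumR_perm (l1 l2 : seq R) : perm_eq l1 l2 -> sumR l1 = sumR l2.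
Proof. by move=> P; rewrite /sumR (perm_big _ P). Qed.
Lemma sumR_filter (a : pred R) (l : seq R) :
  sumR l = sumR (filter a l) + sumR (filter (predC a) l).
Proof. by rewrite /sumR !big_filter (bigID a). Qed.

Lemma greedy_sum (pi : R) l :
  sumR l = sumR (greedy pi l).1.2 + sumR (greedy pi l).2 /\
  (greedy pi l).1.1 = pi - sumR (greedy pi l).2.
Proof.
elim: l pi => [|x l IH] pi /=.
  by rewrite !sumR_nil addr0 subr0.
case: ifP => _; have := IH (pi - x); have := IH pi;
  case E1: (greedy pi l) => [[p1 k1] r1];
  case E2: (greedy (pi - x) l) => [[p2 k2] r2] /= [A1 B1] [A2 B2];
  rewrite !sumR_cons.
  by rewrite A2 B2; split; lra.
by rewrite A1 B1; split; lra.
Qed.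

Lemma greedy_mem (pi : R) l x :
  (x \in (greedy pi l).1.2 -> x \in l) /\ (x \in (greedy pi l).2 -> x \in l).
Proof.
elim: l pi => [|y l IH] pi //=.
rewrite inE.
case: ifP => _; have := IH (pi - y); have := IH pi;
  case E1: (greedy pi l) => [[p1 k1] r1];
  case E2: (greedy (pi - y) l) => [[p2 k2] r2] /= [A1 B1] [A2 B2].
  split; first by move/A2 ->; rewrite orbT.
  by rewrite inE => /orP [->//|/B2 ->]; rewrite orbT.
split; last by move/B1 ->; rewrite orbT.
by rewrite inE => /orP [->//|/A1 ->]; rewrite orbT.
Qed.

Lemma greedy_ge0 (pi : R) l : 0 <= pi -> 0 <= (greedy pi l).1.1.
Proof.
elim: l pi => [|y l IH] pi //= H.
case: ifP => Hy; have := IH (pi - y); have := IH pi;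
  case E1: (greedy pi l) => [[p1 k1] r1];
  case E2: (greedy (pi - y) l) => [[p2 k2] r2] /= A1 A2.
  by apply: A2; rewrite subr_ge0.
by apply: A1.
Qed.

Lemma greedy_lt (pi : R) l : (forall x, x \in l -> 0 <= x) ->
  forall x, x \in (greedy pi l).1.2 -> (greedy pi l).1.1 < x.
Proof.
elim: l pi => [|y l IH] pi //= H.
have Hl : forall x, x \in l -> 0 <= x by move=> x Hx; apply: H; rewrite inE Hx orbT.
have Hle : forall p, (greedy p l).1.1 <= p.
  move=> p; have [_ ->] := greedy_sum p l.
  rewrite lerBlDr lerDl sumR_ge0 // => z Hz.
  by apply: Hl; have [_ ] := greedy_mem p l z; apply.
case: ifP => Hy; have := IH (pi - y) Hl; have := IH pi Hl; have := Hle pi;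
  case E1: (greedy pi l) => [[p1 k1] r1];
  case E2: (greedy (pi - y) l) => [[p2 k2] r2] /= L A1 A2 x.
  exact: A2.
rewrite inE => /orP [/eqP ->|]; last exact: A1.
by apply: (le_lt_trans L); rewrite ltNge Hy.
Qed.

Lemma caseB (g xi H C P U : R) : 0 < g -> g < 1 -> g * xi = 1 + g / 2 -> 0 < xi ->
  (H - P + g * C) * xi <= 2 * U -> P * xi <= U -> P <= H -> H + C <= 2 * U.
Proof.
move=> g0 g1 gx x0 h1 h2 h3.
have h4 : 0 <= (H - P) * xi * (1 - g) by apply: mulr_ge0; [apply: mulr_ge0|]; lra.
have h5 : g * (P * xi) <= g * U by rewrite ler_pM2l.
have e : g * xi * (H + C) <= (1 + g / 2) * (2 * U) by lra.
rewrite gx in e; have p0 : 0 < 1 + g / 2 by lra.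
by rewrite -(ler_pM2l p0).
Qed.
End Aux.

Section Main.
Variable R : realFieldType.
Variable m : nat.
Variable s : 'I_m.+1 -> R.
Variable gamma : R.
Hypothesis spos : forall i, 0 < s i.
Hypothesis g0 : 0 < gamma.
Hypothesis g1 : gamma < 1.
Variable xi : R.
Hypothesis xidef : xi = gamma^-1 + 2^-1.

Lemma gxi : gamma * xi = 1 + gamma / 2.
Proof. rewrite xidef mulrDr mulfV ?gt_eqF //. Qed.

Lemma xi_gt1 : 1 < xi.
Proof.
have h := gxi. have : 1 < gamma^-1 by rewrite invf_gt1.
rewrite xidef => h2. have : 0 < 2^-1 :> R by rewrite invr_gt0 ltr0n.
lra.
Qed.

Definition InvM (st : state R m) i :=
  [/\ forall x, x \in hat st i -> 0 < x /\ x * xi <= Tg st * s i,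
      forall x, x \in chk st i -> 0 < x /\ x <= Tg st * s i,
      0 <= pot st i,
      (sumR (hat st i) - pot st i + gamma * sumR (chk st i)) * xi <= 2 * (Tg st * s i) &
      sumR (hat st i) + sumR (chk st i) <= 2 * (Tg st * s i)].

Definition Inv (st : state R m) :=
  [/\ 0 < Tg st, forall x, x \in que st -> 0 < x,
      forall x, cur st = Some x -> 0 < x & forall i, InvM st i].

Lemma split_old (j : R) l : sumR l = sumR (stay_old 1 j l) + sumR (to_new 1 j l).
Proof.
rewrite (@sumR_filter _ (fun q => q < j / 1)); congr (_ + _); congr sumR.
by apply: eq_filter => q /=; rewrite leNgt.
Qed.

Lemma pos_le (x T : R) : 0 < x -> x * xi <= T -> x <= T.
Proof.
move=> x0 h; apply: le_trans h; rewrite ler_pMr //; apply: ltW; exact: xi_gt1.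
Qed.

Lemma inv_init p1 : 0 < p1 -> Inv (init s p1).
Proof.
move=> p0; have s0 := spos ord0.
have e : p1 / s ord0 * s ord0 = p1 by rewrite divfK ?gt_eqF.
split => //=; first by rewrite divr_gt0.
move=> i; split => //=.
- move=> x; case: eqP => [->|_]; last by [].
  by rewrite inE => /eqP ->; rewrite e.
- case: eqP => [->|_]; rewrite ?e !sumR_nil ?sumR_cons ?sumR_nil.
    have h : gamma * xi * p1 = (1 + gamma / 2) * p1 by rewrite gxi.
    have h2 : gamma * p1 <= 1 * p1 by rewrite ler_pM2r // ltW.
    rewrite addr0; lra.
  have : 0 <= p1 / s ord0 * s i by rewrite mulr_ge0 // ?divr_ge0 // ltW.
  lra.
- case: eqP => [->|_]; rewrite ?e !sumR_nil ?sumR_cons ?sumR_nil; first lra.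
  have : 0 <= p1 / s ord0 * s i by rewrite mulr_ge0 // ?divr_ge0 // ltW.
  lra.
Qed.

Lemma mem_le_sumR (l : seq R) x : (forall y, y \in l -> 0 <= y) -> x \in l -> x <= sumR l.
Proof.
elim: l => [|y l IH] //= H; rewrite inE sumR_cons => /orP [/eqP ->|Hx].
  rewrite lerDl; apply: sumR_ge0 => z Hz; apply: H; by rewrite inE Hz orbT.
have : 0 <= y by apply: H; rewrite mem_head.
have : x <= sumR l by apply: IH => // z Hz; apply: H; rewrite inE Hz orbT.
lra.
Qed.

Lemma le_mulxi a b c : a <= b -> b * xi <= c -> a * xi <= c.
Proof.
move=> h1 h2; apply: le_trans h2; rewrite ler_pM2r //.
by have := xi_gt1; lra.
Qed.

Arguments pos_le {x T}.
Lemma inv_step st st' : Inv st -> step s 1 gamma xi st st' -> Inv st'.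
Proof.
have x1 := xi_gt1.
move=> I H; case: H I => {st st'}.
- move=> T h c pi p p0 [T0 Q0 C0 M]; split => //= x; rewrite inE => /eqP -> //.
- move=> T h c pi q j jq jmax [T0 Q0 C0 M]; split => //=.
    by move=> x /mem_rem; apply: Q0.
  by move=> x [<-]; apply: Q0.
- move=> T h c pi q j _ [T0 Q0 C0 M]; split => //=.
    by apply: mulr_gt0 => //; lra.
  move=> i; have [Mh Mc Mp Me Mf] := M i; rewrite /= in Mh Mc Mp Me Mf.
  have U0 : 0 <= T * s i by apply: mulr_ge0; apply: ltW.
  split => //=.
  - move=> x; rewrite mem_cat => /orP [/Mh [x0 hx]|/Mc [x0 hx]]; split => //.
      have := pos_le x0 hx => hx'.
      by rewrite mulrC -mulrA ler_pM2l //; lra.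
    by rewrite mulrC -mulrA ler_pM2l //; lra.
  - rewrite sumR_nil mulr0 addr0 subr0 sumR_cat.
    have -> : 2 * (xi * T * s i) = 2 * (T * s i) * xi by ring.
    rewrite ler_pM2r //; lra.
  - rewrite sumR_nil addr0 sumR_cat.
    have hh : T * s i <= xi * T * s i by rewrite -mulrA ler_peMl //; lra.
    lra.
- move=> T h c pi q j i Av Amin Sat [T0 Q0 C0 M]; split => //= k.
  rewrite /InvM /upd /=; case: eqP => [->|_]; last exact: M k.
  have [Mh Mc Mp Me Mf] := M i; rewrite /= in Mh Mc Mp Me Mf.
  have tn0 : 0 <= sumR (to_new 1 j (h i)).
    by apply: sumR_ge0 => x; rewrite mem_filter => /andP [_ /Mh [/ltW]].
  have sp := split_old j (h i).
  split => //.
  - by move=> x; rewrite mem_filter => /andP [_ /Mh].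
  - move=> x; rewrite mem_cat => /orP [/Mc //|]; rewrite mem_filter => /andP [_ /Mh [x0 hx]].
    by split => //; apply: pos_le.
  - apply: le_mulxi Me; rewrite sumR_cat.
    have hh : gamma * sumR (to_new 1 j (h i)) <= 1 * sumR (to_new 1 j (h i)).
      by apply: ler_wpM2r => //; apply: ltW.
    lra.
  - rewrite sumR_cat; lra.
- move=> T h c pi q j i Av Amin Nsat g [T0 Q0 C0 M].
  rewrite /= in T0 Q0 C0.
  have j0 : 0 < j by apply: C0.
  have [Mh Mc Mp Me Mf] := M i; rewrite /= in Mh Mc Mp Me Mf.
  have si := spos i.
  have jle : j <= T * s i.
    by move: Av => /andP [+ _]; rewrite mul1r ler_pdivrMr.
  have cle : sumR (c i ++ to_new 1 j (h i)) <= T * s i.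
    by apply: ltW; move: Nsat; rewrite ltr_pdivrMr.
  pose L := nonincr_sort (stay_old 1 j (h i)).
  have memL : forall x, x \in L -> x \in h i.
    by move=> x; rewrite /L mem_sort mem_filter => /andP [_].
  have sumL : sumR L = sumR (stay_old 1 j (h i)).
    by apply: sumR_perm; rewrite /L perm_sort.
  have [gs gp] := @greedy_sum _ (gamma * j + pi i) L.
  have memk : forall x, x \in g.1.2 -> x \in h i.
    by move=> x hx; apply: memL; have [+ _] := @greedy_mem _ (gamma * j + pi i) L x; apply.
  have memr : forall x, x \in g.2 -> x \in h i.
    by move=> x hx; apply: memL; have [_ +] := @greedy_mem _ (gamma * j + pi i) L x; apply.
  have tn0 : 0 <= sumR (to_new 1 j (h i)).
    by apply: sumR_ge0 => x; rewrite mem_filter => /andP [_ /Mh [/ltW]].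
  have sp := split_old j (h i).
  have gp0 : 0 <= g.1.1.
    apply: greedy_ge0; apply: addr_ge0 => //; apply: mulr_ge0; apply: ltW => //.
  rewrite -/g in gs gp.
  split => //=.
  - by move=> x; rewrite mem_cat => /orP [/Q0 //|/memr /Mh []].
  - move=> k; rewrite /InvM /upd /=; case: eqP => [->|_]; last exact: M k.
    have Ee : (sumR g.1.2 - g.1.1 + gamma * sumR (c i ++ to_new 1 j (h i) ++ [:: j])) * xi
              <= 2 * (T * s i).
      apply: le_mulxi Me; rewrite !sumR_cat sumR_cons sumR_nil.
      have hh : gamma * sumR (to_new 1 j (h i)) <= 1 * sumR (to_new 1 j (h i)).
        by apply: ler_wpM2r => //; apply: ltW.
      lra.
    split => //.
    + by move=> x /memk /Mh.
    + move=> x; rewrite !mem_cat => /orP [/Mc //|/orP [|]].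
        rewrite mem_filter => /andP [_ /Mh [x0 hx]].
        by split => //; apply: pos_le.
      by rewrite inE => /eqP ->.
    + have [E|[x xk]] : g.1.2 = [::] \/ exists x, x \in g.1.2.
        by case: g.1.2 => [|x k']; [left|right; exists x; rewrite mem_head].
        rewrite E sumR_nil add0r; move: cle; rewrite !sumR_cat sumR_cons sumR_nil; lra.
      have Lnn : forall y, y \in L -> 0 <= y by move=> y /memL /Mh [] y0 _; exact: ltW.
      have Plt : g.1.1 < x by apply: greedy_lt.
      have [x0 hx] := Mh x (memk x xk).
      have Pxi : g.1.1 * xi <= T * s i.
        apply: le_trans hx; rewrite ler_pM2r; [exact: ltW|lra].
      have PH : g.1.1 <= sumR g.1.2.
        apply: le_trans (ltW Plt) _; apply: mem_le_sumR => // y /memk /Mh [] y0 _; exact: ltW.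
      apply: (@caseB _ _ _ _ _ _ _ g0 g1 gxi _ Ee Pxi PH); lra.
Qed.
End Main.

Theorem lemma4 (R : realFieldType) (m : nat) (s : 'I_m.+1 -> R) (gamma p1 : R)
    (st : state R m) :
  (forall i j : 'I_m.+1, (i <= j)%N -> s j <= s i) ->
  (forall i, 0 < s i) ->
  0 < gamma -> gamma < 1 -> 0 < p1 ->
  reach s 1 gamma (gamma^-1 + 2^-1) p1 st ->
  forall i : 'I_m.+1, load s st i <= (1 + 1) * Tg st.
Proof.
move=> _ spos g0 g1 p0 Hr.
have I : @Inv R m s gamma (gamma^-1 + 2^-1) st.
  elim: Hr => [|st1 st2 _ IH Hs]; first exact: (@inv_init R m s gamma spos g0 g1 _ (erefl _) p1 p0).
  exact: (@inv_step R m s gamma spos g0 g1 _ (erefl _) _ _ IH Hs).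
move=> i; have [_ _ _ M] := I; have [_ _ _ _ Mf] := M i.
rewrite /load ler_pdivrMr // sumR_cat; lra.
Qed.
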